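(* For any valid scheme (satisfying (C1)–(C8)) with $N\ge1$, $K\ge2$, \[ I\big(W_{2:K};Q_{1:N}^{[1,\mathcal{R}_U]},A_{1:N}^{[1,\mathcal{R}_U]},\mathcal{R}_S\,\big|\,W_1\big)\le D-L. \]
   Context: Model (SPIR with user-side common randomness). There are $N\ge1$ non-colluding databases, each storing the same $K\ge2$ messages $W_1,\dots,W_K$. Each message consists of $L$ i.i.d. symbols uniform over a sufficiently large finite field $\mathbb{F}_q$; entropies are in $q$-ary units, so $H(W_k)=L$ and $H(W_{1:K})=KL$. The databases share server-side common randomness $\mathcal{R}_S$, unknown to the user. The user holds user-side common randomness $\mathcal{R}_U$, a subset of the components of $\mathcal{R}_S$, unknown to the databases except for its size (uniform over subsets of given cardinality). $\mathcal{F}$ is the user's retrieval-strategy randomness. To retrieve $W_k$ the user sends $Q_n^{[k,\mathcal{R}_U]}$ to database $n$, receiving $A_n^{[k,\mathcal{R}_U]}$; $W_{\bar k}=\{W_j:j\ne k\}$. A valid scheme satisfies for all $k,n,\mathcal{R}_U$: (C1) $I(W_{1:K};k,\mathcal{F},\mathcal{R}_S,\mathcal{R}_U)=0$; (C2) $I(Q_{1:N}^{[k,\mathcal{R}_U]};W_{1:K},\mathcal{R}_S\setminus\mathcal{R}_U)=0$; (C3) $H(Q_{1:N}^{[k,\mathcal{R}_U]}\mid\mathcal{F})=0$; (C4) $H(A_n^{[k,\mathcal{R}_U]}\mid Q_n^{[k,\mathcal{R}_U]},W_{1:K},\mathcal{R}_S)=0$; (C5) $H(W_k\mid\mathcal{F},A_{1:N}^{[k,\mathcal{R}_U]},\mathcal{R}_U)=0$;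 (C6) user privacy: for all $k,k',n,\mathcal{R}_U$ there is $\mathcal{R}_U'$ with $H(\mathcal{R}_U')=H(\mathcal{R}_U)$ and $(Q_n^{[k,\mathcal{R}_U]},A_n^{[k,\mathcal{R}_U]},W_{1:K},\mathcal{R}_S)\sim(Q_n^{[k',\mathcal{R}_U']},A_n^{[k',\mathcal{R}_U']},W_{1:K},\mathcal{R}_S)$; (C7) $I(W_{\bar k};\mathcal{F},A_{1:N}^{[k,\mathcal{R}_U]},\mathcal{R}_U)=0$; (C8) $I(\mathcal{R}_S\setminus\mathcal{R}_U;\mathcal{F},A_{1:N}^{[k,\mathcal{R}_U]},W_k,\mathcal{R}_U)=0$. $D$ is the maximal total number of downloaded symbols (from all databases). *)

(* Defs.v *)
From HB Require Import structures.
From mathcomp Require Import all_boot all_order all_algebra.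
From mathcomp Require Import reals exp.
Set Implicit Arguments. Unset Strict Implicit. Unset Printing Implicit Defensive.
Import Order.TTheory GRing.Theory Num.Theory.
Local Open Scope ring_scope.

(* A probability space is a finite sample space Om with weights P : Om -> R
   (P >= 0, sum P = 1).  A random variable is any function X : Om -> T, T an eqType. *)

Definition is_prob (R : realType) (Om : finType) (P : Om -> R) : Prop :=
  (forall w, 0 <= P w) /\ \sum_(w : Om) P w = 1.

Definition logb (R : realType) (b x : R) : R := ln x / ln b.

Definition pr (R : realType) (Om : finType) (P : Om -> R) (T : eqType)
  (X : Om -> T) (x : T) : R := \sum_(w : Om | X w == x) P w.

Definition vals (Om : finType) (T : eqType) (X : Om -> T) : seq T :=
  undup [seq X w | w <- enum Om].

Definition ent (R : realType) (Om : finType) (P : Om -> R) (b : R) (T : eqType)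
  (X : Om -> T) : R :=
  - \sum_(x <- vals X) pr P X x * logb b (pr P X x).

Definition jnt (Om : finType) (T U : eqType) (X : Om -> T) (Y : Om -> U) :
  Om -> (T * U)%type := fun w => (X w, Y w).

Definition cent (R : realType) (Om : finType) (P : Om -> R) (b : R)
  (T U : eqType) (X : Om -> T) (Y : Om -> U) : R :=
  ent P b (jnt X Y) - ent P b Y.

Definition mi (R : realType) (Om : finType) (P : Om -> R) (b : R)
  (T U : eqType) (X : Om -> T) (Y : Om -> U) : R :=
  ent P b X + ent P b Y - ent P b (jnt X Y).

Definition cmi (R : realType) (Om : finType) (P : Om -> R) (b : R)
  (T U V : eqType) (X : Om -> T) (Y : Om -> U) (Z : Om -> V) : R :=
  ent P b (jnt X Z) + ent P b (jnt Y Z) - ent P b (jnt (jnt X Y) Z) - ent P b Z.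

Definition same_dist (R : realType) (Om : finType) (P : Om -> R) (T : eqType)
  (X Y : Om -> T) : Prop := forall x : T, pr P X x = pr P Y x.

(* Server-side common randomness R_S has M components with values in TR.
   The user's common randomness R_U is the subfamily indexed by S : {set 'I_M}. *)

Definition RU (Om : finType) (M : nat) (TR : eqType) (RS : Om -> {ffun 'I_M -> TR})
  (S : {set 'I_M}) : Om -> {ffun 'I_M -> option TR} :=
  fun w => [ffun j => if j \in S then Some (RS w j) else None].

Definition RSminus (Om : finType) (M : nat) (TR : eqType) (RS : Om -> {ffun 'I_M -> TR})
  (S : {set 'I_M}) : Om -> {ffun 'I_M -> option TR} :=
  fun w => [ffun j => if j \in S then None else Some (RS w j)].

Definition Wk (Om : finType) (K : nat) (MT : eqType) (W : Om -> {ffun 'I_K -> MT})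
  (k : 'I_K) : Om -> MT := fun w => W w k.
Definition Wbar (Om : finType) (K : nat) (MT : eqType) (W : Om -> {ffun 'I_K -> MT})
  (k : 'I_K) : Om -> {ffun 'I_K -> option MT} :=
  fun w => [ffun j => if j == k then None else Some (W w j)].

Definition allN (Om : finType) (N : nat) (T : eqType) (X : 'I_N -> Om -> T) :
  Om -> {ffun 'I_N -> T} := fun w => [ffun n => X n w].

(* A valid scheme: conditions (C1)-(C8).
   - P : probability weights on Om, b = q = #|F| (q-ary units)
   - W : the K messages, each L symbols of F
   - RS : server-side common randomness, S ranges over user subsets of size m
   - Fr : the user's strategy randomness
   - Q k S n, A k S n : query to / answer from database n for desired index k
     and user-side randomness R_U = (components in S) of R_S. *)
Definition valid_scheme (R : realType) (F : finFieldType) (Om : finType) (P : Om -> R)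
  (N K L M m : nat) (TR TF TQ : eqType)
  (W : Om -> {ffun 'I_K -> {ffun 'I_L -> F}})
  (RS : Om -> {ffun 'I_M -> TR}) (Fr : Om -> TF)
  (Q : 'I_K -> {set 'I_M} -> 'I_N -> Om -> TQ)
  (A : 'I_K -> {set 'I_M} -> 'I_N -> Om -> seq F) : Prop :=
  let b := (#|F|%:R : R) in
  (* messages: L i.i.d. uniform symbols each, independent across messages *)
  (forall v, pr P W v = 1 / ((#|F| ^ (K * L))%:R)) /\
  (forall (k : 'I_K) (S : {set 'I_M}), #|S| = m ->
     mi P b W (jnt (jnt (jnt (fun _ : Om => k) Fr) RS) (RU RS S)) = 0) /\
  (forall (k : 'I_K) (S : {set 'I_M}), #|S| = m ->
     mi P b (allN (Q k S)) (jnt W (RSminus RS S)) = 0) /\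
  (forall (k : 'I_K) (S : {set 'I_M}), #|S| = m -> cent P b (allN (Q k S)) Fr = 0) /\
  (forall (k : 'I_K) (S : {set 'I_M}) n, #|S| = m ->
     cent P b (A k S n) (jnt (jnt (Q k S n) W) RS) = 0) /\
  (forall (k : 'I_K) (S : {set 'I_M}), #|S| = m ->
     cent P b (Wk W k) (jnt (jnt Fr (allN (A k S))) (RU RS S)) = 0) /\
  (forall (k k' : 'I_K) n (S : {set 'I_M}), #|S| = m ->
     exists S' : {set 'I_M}, #|S'| = m /\ ent P b (RU RS S') = ent P b (RU RS S) /\
       same_dist P (jnt (jnt (jnt (Q k S n) (A k S n)) W) RS)
                   (jnt (jnt (jnt (Q k' S' n) (A k' S' n)) W) RS)) /\
  (forall (k : 'I_K) (S : {set 'I_M}), #|S| = m ->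
     mi P b (Wbar W k) (jnt (jnt Fr (allN (A k S))) (RU RS S)) = 0) /\
  (forall (k : 'I_K) (S : {set 'I_M}), #|S| = m ->
     mi P b (RSminus RS S)
        (jnt (jnt (jnt Fr (allN (A k S))) (Wk W k)) (RU RS S)) = 0).

(* Download cost: for each desired index k and admissible R_U (subset S), the
   answer of database n is a string of a fixed length d n of symbols of F
   (for every realization of positive probability), and the total number
   of downloaded symbols, \sum_n d n, is at most D (D is the maximum over
   k and R_U of the total download). *)
Definition download_bound (R : realType) (F : finFieldType) (Om : finType) (P : Om -> R)
  (N K M m : nat) (A : 'I_K -> {set 'I_M} -> 'I_N -> Om -> seq F) (D : nat) : Prop :=
  forall (k : 'I_K) (S : {set 'I_M}), #|S| = m ->
    exists d : 'I_N -> nat,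
      (forall (n : 'I_N) (w : Om), 0 < P w -> (size (A k S n w) = d n)%N) /\
      (\sum_(n < N) d n <= D)%N.

(* Main.v *)
Require Import Defs.
From HB Require Import structures.
From mathcomp Require Import all_boot all_order all_algebra.
From mathcomp Require Import reals exp ring lra.
Set Implicit Arguments. Unset Strict Implicit. Unset Printing Implicit Defensive.
Import Order.TTheory GRing.Theory Num.Theory.
Local Open Scope ring_scope.

Definition pA (R : realType) (Om : finType) (P : Om -> R) (T : eqType)
  (X : Om -> T) (w : Om) : R := pr P X (X w).

Lemma sum_vals (R : realType) (Om : finType) (T : eqType) (X : Om -> T)
  (G : Om -> R) :
  \sum_(x <- vals X) \sum_(w | X w == x) G w = \sum_w G w.
Proof.
under eq_bigr do rewrite big_mkcond /=.
rewrite exchange_big /=; apply: eq_bigr => w _.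
rewrite -big_mkcond /= (eq_bigl (fun x => x == X w)); last by move=> x; rewrite eq_sym.
rewrite -big_filter filter_pred1_uniq ?big_seq1 //; first exact: undup_uniq.
by rewrite mem_undup; apply/mapP; exists w => //; rewrite mem_enum.
Qed.

Lemma ent_pt (R : realType) (Om : finType) (P : Om -> R) (b : R) (T : eqType)
  (X : Om -> T) : ent P b X = - \sum_w P w * logb b (pA P X w).
Proof.
rewrite /ent -(sum_vals X); congr (- _); apply: eq_bigr => x _.
rewrite /pr big_distrl /=; apply: eq_bigr => w /eqP Hw.
by rewrite /pA /pr Hw.
Qed.

Lemma pr_ge0 (R : realType) (Om : finType) (P : Om -> R) (T : eqType)
  (X : Om -> T) x : (forall w, 0 <= P w) -> 0 <= pr P X x.
Proof. by move=> HP; apply: sumr_ge0 => w _. Qed.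

Lemma pA_ge (R : realType) (Om : finType) (P : Om -> R) (T : eqType)
  (X : Om -> T) w : (forall w, 0 <= P w) -> P w <= pA P X w.
Proof.
move=> HP; rewrite /pA /pr (bigD1 w) //= lerDl.
by apply: sumr_ge0 => w' _.
Qed.

Lemma pA_gt0 (R : realType) (Om : finType) (P : Om -> R) (T : eqType)
  (X : Om -> T) w : (forall w, 0 <= P w) -> 0 < P w -> 0 < pA P X w.
Proof. by move=> HP Hw; apply: (lt_le_trans Hw); apply: pA_ge. Qed.

Lemma sum_atom (R : realType) (Om : finType) (P : Om -> R) (T : eqType)
  (X : Om -> T) x : (forall w, 0 <= P w) ->
  \sum_(w | X w == x) P w / pA P X w <= 1.
Proof.
move=> HP.
rewrite (eq_bigr (fun w => P w * (pr P X x)^-1)); last first.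
  by move=> w /eqP Hw; rewrite /pA Hw.
rewrite -big_distrl /= -/(pr P X x).
have [->|nz] := eqVneq (pr P X x) 0; first by rewrite mul0r.
by rewrite mulfV.
Qed.

Lemma sum_pos (R : realType) (Om : finType) (P : Om -> R) (p : pred Om) :
  (forall w, 0 <= P w) ->
  \sum_(w | p w) P w = \sum_(w | p w && (0 < P w)) P w.
Proof.
move=> HP; rewrite (bigID (fun w => 0 < P w)) /= addrC big1 ?add0r //.
move=> w /andP [_ Hw]; apply/eqP; rewrite eq_le HP andbT.
by rewrite leNgt.
Qed.

Definition det (R : realType) (Om : finType) (P : Om -> R) (T U : eqType)
  (X : Om -> T) (Y : Om -> U) : Prop :=
  forall w w', 0 < P w -> 0 < P w' -> Y w = Y w' -> X w = X w'.

Lemma pA_det (R : realType) (Om : finType) (P : Om -> R) (T U : eqType)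
  (X : Om -> T) (Y : Om -> U) w : (forall w, 0 <= P w) ->
  det P X Y -> det P Y X -> 0 < P w -> pA P X w = pA P Y w.
Proof.
move=> HP d1 d2 Hw; rewrite /pA /pr (sum_pos _ HP) [RHS](sum_pos _ HP).
apply: eq_bigl => w'; case: (boolP (0 < P w')) => H'; rewrite ?andbF ?andbT //.
apply/eqP/eqP => E; [exact: (d2 _ _ H' Hw E)| exact: (d1 _ _ H' Hw E)].
Qed.

Lemma ent_relabel (R : realType) (Om : finType) (P : Om -> R) b (T U : eqType)
  (X : Om -> T) (Y : Om -> U) : (forall w, 0 <= P w) ->
  det P X Y -> det P Y X -> ent P b X = ent P b Y.
Proof.
move=> HP d1 d2; rewrite !ent_pt; congr (- _); apply: eq_bigr => w _.
have [Hw|Hw] := eqVneq (P w) 0; first by rewrite Hw !mul0r.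
have Hw' : 0 < P w by rewrite lt_def Hw HP.
by rewrite (pA_det HP d1 d2 Hw').
Qed.

Lemma det_refl (R : realType) (Om : finType) (P : Om -> R) (T : eqType)
  (X : Om -> T) : det P X X.
Proof. by move=> w w' _ _. Qed.

Lemma det_trans (R : realType) (Om : finType) (P : Om -> R) (T U V : eqType)
  (X : Om -> T) (Y : Om -> U) (Z : Om -> V) :
  det P X Y -> det P Y Z -> det P X Z.
Proof. by move=> h1 h2 w w' p1 p2 E; apply: h1 => //; apply: h2. Qed.

Lemma det_jnt (R : realType) (Om : finType) (P : Om -> R) (T U V : eqType)
  (X : Om -> T) (Y : Om -> U) (Z : Om -> V) :
  det P X Z -> det P Y Z -> det P (jnt X Y) Z.
Proof. by move=> h1 h2 w w' p1 p2 E; rewrite /jnt (h1 _ _ p1 p2 E) (h2 _ _ p1 p2 E). Qed.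

Lemma det_fst (R : realType) (Om : finType) (P : Om -> R) (T U : eqType)
  (X : Om -> T) (Y : Om -> U) : det P X (jnt X Y).
Proof. by move=> w w' _ _ [E _]. Qed.

Lemma det_snd (R : realType) (Om : finType) (P : Om -> R) (T U : eqType)
  (X : Om -> T) (Y : Om -> U) : det P Y (jnt X Y).
Proof. by move=> w w' _ _ [_ E]. Qed.

Lemma det_comp (R : realType) (Om : finType) (P : Om -> R) (T U : eqType)
  (X : Om -> T) (f : T -> U) : det P (fun w => f (X w)) X.
Proof. by move=> w w' _ _ ->. Qed.

Lemma det_const (R : realType) (Om : finType) (P : Om -> R) (T U : eqType)
  (X : Om -> T) (c : U) : det P (fun _ => c) X.
Proof. by []. Qed.

Lemma ln_le_sub1 (R : realType) (x : R) : 0 < x -> ln x <= x - 1.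
Proof.
move=> x0; have := @le_ln1Dx R (x - 1).
rewrite addrCA subrr addr0; apply.
by rewrite ltrBrDl subrr.
Qed.

Lemma pAE (R : realType) (Om : finType) (P : Om -> R) (T : eqType)
  (X : Om -> T) w : pA P X w = \sum_(w' | X w' == X w) P w'.
Proof. by []. Qed.

Lemma S_le1 (R : realType) (Om : finType) (P : Om -> R) (T U V : eqType)
  (X : Om -> T) (Y : Om -> U) (Z : Om -> V) : is_prob P ->
  \sum_w P w * (pA P (jnt X Z) w * pA P (jnt Y Z) w /
                (pA P (jnt (jnt X Y) Z) w * pA P Z w)) <= 1.
Proof.
move=> [HP H1].
pose c w := pA P (jnt (jnt X Y) Z) w; pose d w := pA P Z w.
pose f w w1 w2 := if (jnt X Z w1 == jnt X Z w) && (jnt Y Z w2 == jnt Y Z w)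
   then P w1 * P w2 * (P w / (c w * d w)) else 0.
have E1 : \sum_w P w * (pA P (jnt X Z) w * pA P (jnt Y Z) w / (c w * d w))
   = \sum_w \sum_w1 \sum_w2 f w w1 w2.
  apply: eq_bigr => w _.
  rewrite (pAE P (jnt X Z)) (pAE P (jnt Y Z)).
  set Q := c w * d w.
  rewrite big_distrlr /=.
  have -> : forall A : R, P w * (A / Q) = A * (P w / Q) by move=> A; ring.
  rewrite big_distrl /= big_mkcond /=; apply: eq_bigr => w1 _.
  rewrite /f; case: (jnt X Z w1 == jnt X Z w) => /=; last first.
    by rewrite big1.
  rewrite big_distrl /= big_mkcond /=; apply: eq_bigr => w2 _.
  by case: (jnt Y Z w2 == jnt Y Z w).
rewrite E1 exchange_big /=.
under eq_bigr do rewrite exchange_big /=.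
pose g w1 w2 := if Z w2 == Z w1 then P w1 * P w2 / d w1 else 0.
apply: (@le_trans _ _ (\sum_w1 \sum_w2 g w1 w2)).
  apply: ler_sum => w1 _; apply: ler_sum => w2 _.
  rewrite /g; case: eqP => Ez; last first.
    rewrite big1 // => w _; rewrite /f.
    case: eqP => //= /pair_equal_spec [_ E1z]; case: eqP => //= /pair_equal_spec [_ E2z].
    by case: Ez; rewrite E1z E2z.
  pose t := ((X w1, Y w2), Z w1).
  apply: (@le_trans _ _ (\sum_w if jnt (jnt X Y) Z w == t then P w1 * P w2 / d w1 * (P w / c w) else 0)).
    apply: ler_sum => w _; rewrite /f.
    case: eqP => /= [/pair_equal_spec [Ex Ez1]|_]; last first.
      by case: ifP => // _; rewrite !mulr_ge0 ?invr_ge0 ?HP ?pr_ge0.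
    case: eqP => /= [/pair_equal_spec [Ey Ez2]|_]; last first.
      by case: ifP => // _; rewrite !mulr_ge0 ?invr_ge0 ?HP ?pr_ge0.
    have -> : jnt (jnt X Y) Z w == t by rewrite /t /jnt Ex Ey Ez1.
    have -> : d w = d w1 by rewrite /d /pA Ez1.
    by rewrite invfM le_eqVlt; apply/orP; left; apply/eqP; ring.
  rewrite -big_mkcond /= -big_distrr /=.
  rewrite -[X in _ <= X]mulr1; apply: ler_wpM2l.
    by rewrite !mulr_ge0 ?invr_ge0 ?HP ?pr_ge0.
  exact: sum_atom.
rewrite -H1; apply: ler_sum => w1 _.
rewrite /g -big_mkcond /=.
rewrite (eq_bigr (fun w2 => P w1 / d w1 * P w2)); last by move=> w2 _; rewrite mulrAC.
rewrite -big_distrr /= -/(pr P Z (Z w1)) -/(pA P Z w1) -/(d w1).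
have [->|nz] := eqVneq (d w1) 0; first by rewrite mulr0 HP.
by rewrite -mulrA mulVf // mulr1.
Qed.

Lemma cmi_ge0 (R : realType) (Om : finType) (P : Om -> R) (b : R) (T U V : eqType)
  (X : Om -> T) (Y : Om -> U) (Z : Om -> V) : is_prob P -> 1 < b ->
  0 <= cmi P b X Y Z.
Proof.
move=> [HP H1] b1.
have lb : 0 < ln b by apply: ln_gt0.
set a := pA P (jnt X Z); set a2 := pA P (jnt Y Z).
set c := pA P (jnt (jnt X Y) Z); set d := pA P Z.
have E : cmi P b X Y Z = \sum_w P w * (logb b (c w) + logb b (d w) - logb b (a w) - logb b (a2 w)).
  rewrite /cmi !ent_pt.
  under [RHS]eq_bigr do rewrite !mulrDr !mulrN.
  rewrite !sumrB big_split /=.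
  rewrite -/a -/a2 -/c -/d; ring.
rewrite E.
apply: (@le_trans _ _ (\sum_w P w * (1 - a w * a2 w / (c w * d w)) / ln b)).
  rewrite -mulr_suml /=; apply: mulr_ge0; last by rewrite invr_ge0 ltW.
  under eq_bigr do rewrite mulrDr mulr1 mulrN.
  rewrite sumrB H1 subr_ge0.
  exact: S_le1.
apply: ler_sum => w _.
have [->|nz] := eqVneq (P w) 0; first by rewrite !mul0r.
have Pw : 0 < P w by rewrite lt_def nz HP.
have pa : 0 < a w by apply: pA_gt0.
have pa2 : 0 < a2 w by apply: pA_gt0.
have pc : 0 < c w by apply: pA_gt0.
have pd : 0 < d w by apply: pA_gt0.
have pr0 : 0 < a w * a2 w / (c w * d w) by rewrite !(mulr_gt0, invr_gt0).
have := ln_le_sub1 pr0.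
rewrite ln_div ?posrE ?mulr_gt0 // !lnM ?posrE // => Hl.
rewrite /logb -mulrA ler_pM2l //.
have -> : ln (c w) / ln b + ln (d w) / ln b - ln (a w) / ln b - ln (a2 w) / ln b
   = (ln (c w) + ln (d w) - ln (a w) - ln (a2 w)) / ln b by ring.
rewrite ler_pM2r ?invr_gt0 //.
by rewrite -subr_ge0; rewrite -subr_ge0 in Hl; 
   apply: (le_trans Hl); rewrite le_eqVlt; apply/orP; left; apply/eqP; ring.
Qed.

Lemma pA_split (R : realType) (Om : finType) (P : Om -> R) (T U : eqType)
  (X : Om -> T) (Y : Om -> U) w :
  pA P Y w = pA P (jnt X Y) w + \sum_(w' | (Y w' == Y w) && (X w' != X w)) P w'.
Proof.
rewrite /pA /pr (bigID (fun w' => X w' == X w)) /=; congr (_ + _).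
apply: eq_bigl => w'; rewrite /jnt xpair_eqE andbC //.
Qed.

Lemma pA_jnt_le (R : realType) (Om : finType) (P : Om -> R) (T U : eqType)
  (X : Om -> T) (Y : Om -> U) w : (forall w, 0 <= P w) ->
  pA P (jnt X Y) w <= pA P Y w.
Proof.
move=> HP; rewrite (@pA_split _ _ P _ _ X Y) lerDl; exact: sumr_ge0.
Qed.

Lemma det_of_cent0 (R : realType) (Om : finType) (P : Om -> R) (b : R) (T U : eqType)
  (X : Om -> T) (Y : Om -> U) : is_prob P -> 1 < b ->
  cent P b X Y = 0 -> det P X Y.
Proof.
move=> [HP H1] b1 H0.
have lb : 0 < ln b by apply: ln_gt0.
have E : cent P b X Y = \sum_w P w * (logb b (pA P Y w) - logb b (pA P (jnt X Y) w)).
  rewrite /cent !ent_pt.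
  under [RHS]eq_bigr do rewrite mulrDr mulrN.
  rewrite sumrB; ring.
have Hge : forall w, true -> 0 <= P w * (logb b (pA P Y w) - logb b (pA P (jnt X Y) w)).
  move=> w _.
  have [->|nz] := eqVneq (P w) 0; first by rewrite mul0r.
  have Pw : 0 < P w by rewrite lt_def nz HP.
  apply: mulr_ge0 => //; rewrite subr_ge0 /logb ler_pM2r ?invr_gt0 //.
  rewrite ler_ln ?posrE ?pA_gt0 //; exact: pA_jnt_le.
rewrite E in H0.
have Hz := psumr_eq0P Hge H0.
move=> w w' Pw Pw' Eyw.
have := Hz w isT.
move/eqP; rewrite mulf_eq0 gt_eqF //= subr_eq0 /logb.
have lbi : (ln b)^-1 != 0 by rewrite invr_eq0 gt_eqF.
rewrite (can_eq (mulfK lbi)) => /eqP.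
move/ln_inj; rewrite !posrE !pA_gt0 // => /(_ isT isT) Heq.
move: Heq; rewrite (@pA_split _ _ P _ _ X Y) -{2}[pA P (jnt X Y) w]addr0 => /addrI Hs.
apply/eqP; apply: contraTT Pw' => Hne.
have := @psumr_eq0P _ _ _ _ (fun i _ => HP i) Hs w'.
by rewrite Eyw eqxx eq_sym Hne => /(_ isT) ->; rewrite ltxx.
Qed.

Lemma ent_const (R : realType) (Om : finType) (P : Om -> R) (b : R) (T : eqType)
  (c : T) : is_prob P -> ent P b (fun _ : Om => c) = 0.
Proof.
move=> [HP H1]; rewrite ent_pt big1 ?oppr0 // => w _.
rewrite /pA /pr (eq_bigl xpredT) ?H1; last by move=> w'; rewrite eqxx.
by rewrite /logb ln1 mul0r mulr0.
Qed.

Lemma mi_ge0 (R : realType) (Om : finType) (P : Om -> R) (b : R) (T U : eqType)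
  (X : Om -> T) (Y : Om -> U) : is_prob P -> 1 < b -> 0 <= mi P b X Y.
Proof.
move=> Hp b1; have := cmi_ge0 X Y (fun _ => tt) Hp b1.
have HP := Hp.1.
rewrite /cmi /mi ent_const // subr0.
rewrite (@ent_relabel _ _ P b _ _ (jnt X (fun _ => tt)) X) //; last first.
- exact: det_fst.
- by apply: det_jnt; [exact: det_refl| exact: det_const].
rewrite (@ent_relabel _ _ P b _ _ (jnt Y (fun _ => tt)) Y) //; last first.
- exact: det_fst.
- by apply: det_jnt; [exact: det_refl| exact: det_const].
rewrite (@ent_relabel _ _ P b _ _ (jnt (jnt X Y) (fun _ => tt)) (jnt X Y)) //.
- by apply: det_jnt; [exact: det_refl| exact: det_const].
- exact: det_fst.
Qed.

Lemma sum_sub (R : realType) (Om : finType) (F : Om -> R) (p q : pred Om) :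
  (forall w, 0 <= F w) -> (forall w, p w -> q w) ->
  \sum_(w | p w) F w <= \sum_(w | q w) F w.
Proof.
move=> HF Hpq; rewrite big_mkcond [X in _ <= X]big_mkcond /=.
apply: ler_sum => w _; case: ifP => [/Hpq ->|_] //; by case: ifP.
Qed.

Lemma sum_inv_pA (R : realType) (Om : finType) (P : Om -> R) (T : eqType)
  (U : finType) (X : Om -> T) (g : T -> U) : (forall w, 0 <= P w) ->
  (forall w w', 0 < P w -> 0 < P w' -> g (X w) = g (X w') -> X w = X w') ->
  \sum_w P w / pA P X w <= #|U|%:R.
Proof.
move=> HP Hinj.
rewrite (partition_big (fun w => g (X w)) xpredT) //=.
rewrite -sum1_card natr_sum; apply: ler_sum => u _.
have F0 : forall w, 0 <= P w / pA P X w by move=> w; rewrite mulr_ge0 ?invr_ge0 ?pr_ge0.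
case: (pickP (fun w => (g (X w) == u) && (0 < P w))) => [w0 /andP [/eqP Hu Pw0]|Hn].
  rewrite (bigID (fun w => 0 < P w)) /= [X in _ + X]big1 ?addr0; last first.
    move=> w /andP [_ Hw]; have -> : P w = 0 by apply/eqP; rewrite eq_le HP andbT leNgt.
    by rewrite mul0r.
  apply: (le_trans _ (@sum_atom _ _ P _ X (X w0) HP)).
  apply: sum_sub => // w /andP [/eqP Hg Pw].
  by apply/eqP; apply: Hinj => //; rewrite Hg Hu.
rewrite big1 // => w Hw.
have := Hn w; rewrite Hw /= => Hp.
have -> : P w = 0 by apply/eqP; rewrite eq_le HP andbT leNgt Hp.
by rewrite mul0r.

Qed.

Lemma ent_le_card (R : realType) (Om : finType) (P : Om -> R) (b : R) (T : eqType)
  (U : finType) (X : Om -> T) (g : T -> U) : is_prob P -> 1 < b ->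
  (forall w w', 0 < P w -> 0 < P w' -> g (X w) = g (X w') -> X w = X w') ->
  ent P b X <= logb b #|U|%:R.
Proof.
move=> [HP H1] b1 Hinj.
have lb : 0 < ln b by apply: ln_gt0.
have [w0 Pw0] : exists w, 0 < P w.
  apply/existsP; apply: contraT; rewrite negb_exists => /forallP Hn.
  have : \sum_w P w = 0.
    by apply: big1 => w _; have := Hn w => Hp; apply/eqP; rewrite eq_le HP andbT leNgt.
  by rewrite H1 => /eqP; rewrite oner_eq0.
have Un : 0 < (#|U|%:R : R).
  by rewrite ltr0n; apply/card_gt0P; exists (g (X w0)).
set n := (#|U|%:R : R) in Un *.
have E : ent P b X - logb b n = \sum_w P w * (- logb b (pA P X w) - logb b n).
  rewrite ent_pt; under [RHS]eq_bigr do rewrite mulrBr mulrN.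
  by rewrite sumrB -big_distrl /= H1 mul1r sumrN.
rewrite -subr_le0 E.
apply: (@le_trans _ _ (\sum_w P w * ((n * pA P X w)^-1 - 1) / ln b)).
  apply: ler_sum => w _.
  have [->|nz] := eqVneq (P w) 0; first by rewrite !mul0r.
  have Pw : 0 < P w by rewrite lt_def nz HP.
  have pa : 0 < pA P X w by apply: pA_gt0.
  have pr0 : 0 < (n * pA P X w)^-1 by rewrite invr_gt0 mulr_gt0.
  have := ln_le_sub1 pr0.
  rewrite lnV ?posrE ?mulr_gt0 // lnM ?posrE // => Hl.
  rewrite /logb -mulrA ler_pM2l //.
  have -> : - (ln (pA P X w) / ln b) - ln n / ln b = (- (ln n + ln (pA P X w))) / ln b by ring.
  by rewrite ler_pM2r ?invr_gt0.
rewrite -mulr_suml /=; apply: mulr_le0_ge0; last by rewrite invr_ge0 ltW.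
under eq_bigr do rewrite mulrBr mulr1.
rewrite sumrB H1 subr_le0.
under eq_bigr do rewrite invfM mulrCA mulrA.
under eq_bigr do rewrite -mulrA.
rewrite -big_distrr /= mulrC ler_pdivrMr // mul1r.
exact: sum_inv_pA Hinj.
Qed.

Lemma card_F_gt1 (F : finFieldType) : (1 < #|F|)%N.
Proof. by apply/card_gt1P; exists 0, 1; rewrite !inE eq_sym oner_eq0. Qed.

Lemma logbX (R : realType) (b : R) n : 1 < b -> logb b (b ^+ n) = n%:R.
Proof.
move=> b1; have lb : 0 < ln b by apply: ln_gt0.
rewrite /logb lnXn ?(lt_trans ltr01) // -mulr_natr; field; exact: lt0r_neq0.
Qed.

Lemma ent_unif (R : realType) (Om : finType) (P : Om -> R) (b : R) (T : eqType)
  (X : Om -> T) c : is_prob P -> (forall x, pr P X x = c) -> ent P b X = - logb b c.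
Proof.
move=> [HP H1] Hc; rewrite ent_pt; congr (- _).
under eq_bigr do rewrite /pA Hc.
by rewrite -big_distrl /= H1 mul1r.
Qed.

Lemma pr_comp (R : realType) (Om : finType) (P : Om -> R) (T : finType) (U : eqType)
  (X : Om -> T) (f : T -> U) y :
  pr P (fun w => f (X w)) y = \sum_(x | f x == y) pr P X x.
Proof.
rewrite /pr (partition_big X (fun x => f x == y)) //=.
apply: eq_bigr => x /eqP Hx; apply: eq_bigl => w.
by apply/andP/eqP => [[] _ /eqP //|E]; rewrite E Hx.
Qed.

Lemma sum_pred_total (R : realType) (Om : finType) (P : Om -> R) (T : finType)
  (X : Om -> T) : \sum_(x : T) pr P X x = \sum_w P w.
Proof.
by rewrite (partition_big X xpredT).  
Qed.

Definition swp (T : eqType) (x y t : T) := if t == x then y else if t == y then x else t.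

Lemma swpK (T : eqType) (x y : T) : involutive (swp x y).
Proof.
move=> t; rewrite /swp; case: (eqVneq t x) => [->|nx].
  rewrite eqxx; case: (eqVneq y x) => [->|]; by rewrite ?eqxx.
case: (eqVneq t y) => [->|ny]; first by rewrite eqxx.
by rewrite (negbTE nx) (negbTE ny).
Qed.

Lemma pr_Wk_unif (R : realType) (Om : finType) (P : Om -> R) (K : nat) (T : finType)
  (W : Om -> {ffun 'I_K -> T}) (k : 'I_K) c : is_prob P ->
  (forall v, pr P W v = c) -> forall x, pr P (Wk W k) x = (#|T|%:R)^-1.
Proof.
move=> [HP H1] Hc.
have E : forall x, pr P (Wk W k) x = \sum_(v : {ffun 'I_K -> T} | v k == x) c.
  move=> x; rewrite (@pr_comp _ _ P _ _ W (fun v => v k)).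
  by apply: eq_bigr => v _; rewrite Hc.
have Sym : forall x y, pr P (Wk W k) x = pr P (Wk W k) y.
  move=> x y; rewrite !E.
  pose s (v : {ffun 'I_K -> T}) := [ffun j => if j == k then swp x y (v j) else v j].
  have sK : involutive s.
    by move=> v; apply/ffunP => j; rewrite !ffunE; case: eqP => // _; rewrite swpK.
  rewrite (reindex_inj (inv_inj sK)) /=; apply: eq_bigl => v.
  rewrite /s ffunE eqxx /swp.
  case: (eqVneq (v k) y) => [->|ny]; first by case: (eqVneq y x) => [->|_]; rewrite eqxx.
  case: (eqVneq (v k) x) => [E2|N]; last by rewrite (negbTE N).
  by rewrite -E2 eq_sym (negbTE ny).
move=> x.
have Hs : \sum_(x0 : T) pr P (Wk W k) x = 1.
  by rewrite -H1 -(sum_pred_total P (Wk W k)); apply: eq_bigr => y _; exact: Sym.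
rewrite sumr_const -mulr_natr in Hs.
have nz : (#|T|%:R : R) != 0.
  by apply/eqP => E0; rewrite E0 mulr0 in Hs; move/eqP: Hs; rewrite eq_sym oner_eq0.
by apply: (mulIf nz); rewrite Hs mulVf.
Qed.

Lemma ent_allN_le (R : realType) (F : finFieldType) (Om : finType) (P : Om -> R)
  (N : nat) (A' : 'I_N -> Om -> seq F) (d : 'I_N -> nat) (D : nat) :
  is_prob P -> (forall n w, 0 < P w -> size (A' n w) = d n) ->
  (\sum_(n < N) d n <= D)%N -> ent P (#|F|%:R : R) (allN A') <= D%:R.
Proof.
move=> Hp Hs HD.
have b1 : 1 < (#|F|%:R : R) by rewrite ltr1n card_F_gt1.
set dd := (\sum_(n < N) d n)%N.
pose g (v : {ffun 'I_N -> seq F}) : dd.-tuple F :=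
  insubd (nseq_tuple dd 0) (flatten [seq v n | n <- enum 'I_N]).
have Hsz : forall w, 0 < P w -> size (flatten [seq allN A' w n | n <- enum 'I_N]) = dd.
  move=> w Pw; rewrite size_flatten /shape -map_comp.
  rewrite (eq_map (g := d)); last by move=> n /=; rewrite /allN ffunE Hs.
  by rewrite sumnE big_map big_enum.
have Hsh : forall w, 0 < P w -> shape [seq allN A' w n | n <- enum 'I_N] = [seq d n | n <- enum 'I_N].
  move=> w Pw; rewrite /shape -map_comp; apply: eq_map => n /=.
  by rewrite /allN ffunE Hs.
have := @ent_le_card R Om P (#|F|%:R) _ _ (allN A') g Hp b1.
rewrite card_tuple natrX logbX // => H.
apply: (le_trans (H _)); first last.
  by rewrite ler_nat.
move=> w w' Pw Pw' Eg.
have Ef : flatten [seq allN A' w n | n <- enum 'I_N] = flatten [seq allN A' w' n | n <- enum 'I_N].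
  have := congr1 val Eg; rewrite /g !val_insubd Hsz // Hsz // eqxx //.
have Em : [seq allN A' w n | n <- enum 'I_N] = [seq allN A' w' n | n <- enum 'I_N].
  by rewrite -(flattenK [seq allN A' w n | n <- enum 'I_N]) -(flattenK [seq allN A' w' n | n <- enum 'I_N]) Ef !Hsh.
apply/ffunP => n; move/eq_in_map: Em; apply.
by rewrite mem_enum.
Qed.

Lemma det_l (R : realType) (Om : finType) (P : Om -> R) (T U V : eqType)
  (X : Om -> T) (Y : Om -> U) (Z : Om -> V) : det P X Y -> det P X (jnt Y Z).
Proof. by move=> h w w' p p' [E _]; apply: h. Qed.
Lemma det_r (R : realType) (Om : finType) (P : Om -> R) (T U V : eqType)
  (X : Om -> T) (Y : Om -> U) (Z : Om -> V) : det P X Z -> det P X (jnt Y Z).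
Proof. by move=> h w w' p p' [_ E]; apply: h. Qed.

Ltac ds n :=
  lazymatch goal with
  | |- det _ (jnt _ _) _ => apply: det_jnt; [ds n | ds n]
  | _ =>
    lazymatch n with
    | O => first [exact: det_refl | exact: det_const]
    | S ?m =>
      first [ exact: det_refl | exact: det_const
            | (apply: det_l; ds m) | (apply: det_r; ds m)
            | match goal with h : det _ ?X _ |- det _ ?X _ =>
                apply: (det_trans h); ds m end ]
    end
  end.

Unset Implicit Arguments. Set Strict Implicit. Set Printing Implicit Defensive.

Theorem lemma1 (R : realType) (F : finFieldType) (Om : finType) (P : Om -> R)
  (N K L M m D : nat) (TR TF TQ : eqType)
  (W : Om -> {ffun 'I_K -> {ffun 'I_L -> F}})
  (RS : Om -> {ffun 'I_M -> TR}) (Fr : Om -> TF)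
  (Q : 'I_K -> {set 'I_M} -> 'I_N -> Om -> TQ)
  (A : 'I_K -> {set 'I_M} -> 'I_N -> Om -> seq F)
  (k1 : 'I_K) (S : {set 'I_M}) :
  (1 <= N)%N -> (2 <= K)%N -> nat_of_ord k1 = 0%N ->
  is_prob P ->
  valid_scheme P m W RS Fr Q A ->
  download_bound P m A D ->
  #|S| = m ->
  cmi P (#|F|%:R : R) (Wbar W k1)
      (jnt (jnt (allN (Q k1 S)) (allN (A k1 S))) RS) (Wk W k1)
    <= D%:R - L%:R.
Proof.
move=> _ _ _ Hp Hv Hdb HS.
have HP := Hp.1.
set b := (#|F|%:R : R).
have b1 : 1 < b by rewrite ltr1n card_F_gt1.
move: Hv; rewrite /valid_scheme -/b => [[HW [C1 [_ [C3 [C4 [C5 _]]]]]]].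
set W1 := Wk W k1; set Wb := Wbar W k1.
set Qa := allN (Q k1 S); set Aa := allN (A k1 S).
set RUv := RU RS S.
have dQ : det P Qa Fr by apply: (det_of_cent0 Hp b1); exact: C3.
have dA : det P Aa (jnt (jnt Qa W) RS).
  move=> w w' p p' [EQ EW ERS]; apply/ffunP => n; rewrite /Aa /allN !ffunE.
  apply: (det_of_cent0 Hp b1 (C4 k1 S n HS)) => //.
  have := congr1 (fun f : {ffun 'I_N -> TQ} => f n) EQ; rewrite /Qa /allN !ffunE /jnt => ->.
  by rewrite EW ERS.
have dW1' : det P W1 (jnt (jnt Fr Aa) RUv) by apply: (det_of_cent0 Hp b1); exact: C5.
have dRU : det P RUv RS by move=> w w' _ _ E; rewrite /RUv /RU E.
have dW1 : det P W1 W by move=> w w' _ _ E; rewrite /W1 /Wk E.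
have dWb : det P Wb W by move=> w w' _ _ E; rewrite /Wb /Wbar E.
have dWW : det P W (jnt Wb W1).
  move=> w w' _ _ [Eb E1]; apply/ffunP => j.
  case: (eqVneq j k1) => [->|nj]; first exact: E1.
  have := congr1 (fun f : {ffun 'I_K -> option {ffun 'I_L -> F}} => f j) Eb; rewrite !ffunE (negbTE nj).
  by case.
have RL := fun (T U : eqType) (X : Om -> T) (Z : Om -> U) => @ent_relabel R Om P b T U X Z HP.
have h1 : ent P b (jnt Wb W1) = ent P b W.
 apply: RL. ds 8%N. ds 8%N.

have h2 := cmi_ge0 Wb Fr (jnt (jnt (jnt Qa Aa) RS) W1) Hp b1.
have h3 : ent P b (jnt Wb (jnt (jnt (jnt Qa Aa) RS) W1)) = ent P b (jnt (jnt Wb (jnt (jnt Qa Aa) RS)) W1) by apply: RL; [ds 8%N | ds 8%N].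
have h4 : ent P b (jnt (jnt Wb Fr) (jnt (jnt (jnt Qa Aa) RS) W1)) = ent P b (jnt (jnt W Fr) RS).
  by apply: RL; [ds 8%N | ds 8%N].
have h5 : ent P b (jnt Fr (jnt (jnt (jnt Qa Aa) RS) W1)) = ent P b (jnt (jnt Fr Aa) RS).
  by apply: RL; [ds 8%N | ds 8%N].
have h6 := C1 k1 S HS.
have h6a : ent P b (jnt (jnt (jnt (fun _ : Om => k1) Fr) RS) RUv) = ent P b (jnt Fr RS).
  by apply: RL; [ds 8%N | ds 8%N].
have h6b : ent P b (jnt W (jnt (jnt (jnt (fun _ : Om => k1) Fr) RS) RUv)) = ent P b (jnt (jnt W Fr) RS).
  by apply: RL; [ds 8%N | ds 8%N].
have h7 := mi_ge0 Aa (jnt Fr RS) Hp b1.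
have h7a : ent P b (jnt Aa (jnt Fr RS)) = ent P b (jnt (jnt Fr Aa) RS) by apply: RL; [ds 8%N | ds 8%N].
have h8 : ent P b Aa <= D%:R.
  have [d [Hd HD]] := Hdb k1 S HS.
  exact: (ent_allN_le Hp (fun n w p => Hd n w p) HD).
have h9 : ent P b W1 = L%:R.
  rewrite (@ent_unif _ _ P b _ W1 ((#|{ffun 'I_L -> F}|%:R)^-1) Hp); last first.
    move=> x; rewrite /W1; exact: (@pr_Wk_unif _ _ P K _ W k1 _ Hp HW).
  have b0 : 0 < b by apply: lt_trans b1.
  rewrite card_ffun card_ord natrX -/b /logb lnV ?posrE ?exprn_gt0 //.
  by rewrite mulNr opprK -(logbX L b1).
rewrite /cmi /mi in h2 h6 h7 *.
lra.
Qed.
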